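(* Let $F=\mathbb{F}_q$ be a finite field of characteristic not $2$, let $K=\mathbb{F}_{q^2}$ be its quadratic extension, $\sigma$ the non-trivial automorphism of $K/F$, and $d\in K$ with $K=F(d)$ and $d^2\in F$. Let $a\in K\setminus F$, $f(t)=t^2-a\in K[t;\sigma]$, $S_f=(K/F,\sigma,a)$ the nonassociative quaternion algebra, and $L_f=S_f\setminus\{0\}$ its multiplicative loop. (i) If $a\ne\lambda d$ for all $\lambda\in F^\times$, then $\mathrm{Aut}(L_f)$ contains a subgroup isomorphic to the cyclic group $\mathbb{Z}/(q+1)\mathbb{Z}$; all automorphisms in this subgroup are inner and extend to automorphisms of $S_f$. (ii) If $a=\lambda d$ for some $\lambda\in F^\times$, then $\mathrm{Aut}(L_f)$ contains a subgroup isomorphic to the dicyclic group of order $2q+2$, all of whose elements extend to automorphisms of $S_f$.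
   Context: $K[t;\sigma]$ is the twisted polynomial ring with $tb=\sigma(b)t$ for $b\in K$. $(K/F,\sigma,a)=K[t;\sigma]/K[t;\sigma](t^2-a)$ is the set of polynomials $x_0+x_1t$ ($x_i\in K$) with multiplication $g\circ h=gh\bmod_r(t^2-a)$, the remainder of right division by $t^2-a$; for $a\in K\setminus F$ it is a proper semifield, and $L_f$ is the loop of its nonzero elements. An inner automorphism of $L_f$ is a loop automorphism of the form $x\mapsto (c_lx)c$ with $c_l$ the left inverse of $c$. The dicyclic group of order $4l$ is $\langle x,y\mid x^{2l}=1,\ y^2=x^l,\ y^{-1}xy=x^{-1}\rangle$. *)

(* Defs.v *)
From HB Require Import structures.
From mathcomp Require Import all_boot all_order all_algebra all_fingroup all_solvable.
Set Implicit Arguments. Unset Strict Implicit. Unset Printing Implicit Defensive.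
Import GRing.Theory.
Local Open Scope ring_scope.

(* Elements x0 + x1 t of S_f = K[t;sigma]/K[t;sigma](t^2 - a) are encoded as
   pairs (x0, x1) : K * K. *)
Section Sf.
Variables (K : fieldType) (sigma : K -> K) (a : K).

Definition sf_zero : K * K := (0, 0).
Definition sf_one : K * K := (1, 0).
Definition sf_add (x y : K * K) : K * K := (x.1 + y.1, x.2 + y.2).
Definition sf_scale (c : K) (x : K * K) : K * K := (c * x.1, c * x.2).
(* (x0 + x1 t) o (y0 + y1 t) = (x0 y0 + x1 sigma(y1) a) + (x0 y1 + x1 sigma(y0)) t,
   i.e. the remainder of right division of the product in K[t;sigma] by t^2 - a *)
Definition sf_mul (x y : K * K) : K * K :=
  (x.1 * y.1 + x.2 * sigma y.2 * a, x.1 * y.2 + x.2 * sigma y.1).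

Definition sf_alg_aut (H : K * K -> K * K) : Prop :=
  [/\ bijective H,
      forall x y, H (sf_add x y) = sf_add (H x) (H y),
      forall c x, sigma c = c -> H (sf_scale c x) = sf_scale c (H x)
    & forall x y, H (sf_mul x y) = sf_mul (H x) (H y)].
End Sf.
Arguments sf_zero {K}.
Arguments sf_one {K}.

Section Loop.
Variables (K : finFieldType) (sigma : K -> K) (a : K).

(* A loop automorphism of L_f = S_f \ {0} is encoded as a permutation of S_f
   fixing 0 (equivalently: a permutation of L_f) that preserves the product. *)
Definition loop_aut (phi : {perm (K * K)}) : bool :=
  (phi sf_zero == sf_zero) &&
  [forall x, forall y, phi (sf_mul sigma a x y) == sf_mul sigma a (phi x) (phi y)].

Definition AutLf : {set {perm (K * K)}} := [set phi | loop_aut phi].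

Definition inner_aut (phi : {perm (K * K)}) : Prop :=
  exists c cl : K * K, [/\ c != sf_zero,
     sf_mul sigma a cl c = sf_one &
     forall x, x != sf_zero -> phi x = sf_mul sigma a (sf_mul sigma a cl x) c].

Definition extends_to_aut (phi : {perm (K * K)}) : Prop :=
  exists H : K * K -> K * K, sf_alg_aut sigma a H /\
     forall x, x != sf_zero -> H x = phi x.

Definition fixF : {set K} := [set x | sigma x == x].
End Loop.

(* Main.v *)
Require Import Defs.
From HB Require Import structures.
From mathcomp Require Import all_boot all_order all_algebra all_fingroup all_solvable.
From mathcomp Require Import all_field.
From mathcomp Require Import zify ring.
Import GRing.Theory.
Local Open Scope ring_scope.

Set Implicit Arguments. Unset Strict Implicit. Unset Printing Implicit Defensive.
Import FinRing.Theory.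

Section DicSec.
Local Open Scope group_scope.
Lemma conj_fix_commute (gT : finGroupType) (x y : gT) : x ^ y = x -> commute x y.
Proof. by move=> H; rewrite /commute conjgC H. Qed.

Lemma dicyclic_exists (n : nat) : (1 < n)%N -> ~~ odd n ->
  exists gT : finGroupType, exists Q : {group gT},
    #|Q| = (2 * n)%N /\
    Q \isog Grp (x : y : (x ^+ n, y ^+ 2 = x ^+ n./2, x ^ y = x ^-1)).
Proof.
move=> n_gt1 evn.
set r := n./2.
have def2r : (2 * r)%N = n by rewrite /r -[in RHS](odd_double_half n) (negPf evn) add0n mul2n.
have r_gt0 : (0 < r)%N by rewrite -(ltn_pmul2l (isT : (0 < 2)%N)) def2r muln0 ltnW.
have r_ltn : (r < n)%N by rewrite -def2r -{1}[r]mul1n ltn_pmul2r.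
have: [set: Extremal.gtype n 4 n.-1] \homg Grp (u : v : u ^+ n, v ^+ 4, u ^ v = u^-1).
  by rewrite -(@Grp_ext_dihedral n n_gt1 4) ?homg_refl.
have: #|[set: Extremal.gtype n 4 n.-1]| = (n * 4)%N.
  by rewrite card_ext_dihedral // mulnC -muln2 -mulnA.
move: (Extremal.gtype n 4 _) => gT.
set B := [set: gT] => oB.
case/existsP=> -[u v] /= /eqP[defB uq v4 uv].
have nUV: <[v]> \subset 'N(<[u]>) by rewrite norms_cycle uv groupV cycle_id.
rewrite norm_joinEr // in defB.
have le_ou: (#[u] <= n)%N by rewrite dvdn_leq ?(ltnW n_gt1) // order_dvdn uq.
have le_ov: (#[v] <= 4)%N by rewrite dvdn_leq // order_dvdn v4.
have tiUV: <[u]> :&: <[v]> = 1 by rewrite cardMg_TI // defB oB leq_mul.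
have{le_ou le_ov} [ou ov]: #[u] = n /\ #[v] = 4%N.
  have:= esym (leqif_mul (leqif_eq le_ou) (leqif_eq le_ov)).2.
  by rewrite -TI_cardMg // defB -oB eqxx eqn0Ngt cardG_gt0; do 2!case: eqP=> //.
have sdB: <[u]> ><| <[v]> = B by rewrite sdprodE.
have uvj j: u ^ (v ^+ j) = (if odd j then u^-1 else u).
  elim: j => [|j IHj]; first by rewrite conjg1.
  by rewrite expgS conjgM uv conjVg IHj (fun_if invg) invgK if_neg.
pose w := u ^+ r * v ^+ 2.
have urV : (u ^+ r)^-1 = u ^+ r.
  by apply/eqP; rewrite eq_invg_mul -expgD addnn -mul2n def2r uq.
have cuw : commute u w.
  apply: commuteM; first exact: commuteX.
  by apply: conj_fix_commute; rewrite uvj.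
have curv : commute (u ^+ r) v.
  by apply: conj_fix_commute; rewrite conjXg uv expgVn urV.
have cvw : commute v w.
  apply: commuteM; last exact: commuteX.
  exact: commute_sym.
have Bc : B \subset 'C[w].
  rewrite -defB mulG_subG !cycle_subG; apply/andP; split; apply/cent1P;
    exact: commute_sym.
have nwB : B \subset 'N(<[w]>) by rewrite cents_norm // cent_cycle.
have w2 : w ^+ 2 = 1.
  rewrite /w expgMn; last exact: commuteX.
  by rewrite -expgM mulnC def2r uq -expgM v4 mulg1.
have w1 : w != 1.
  apply/eqP => w1.
  have : u ^+ r \in <[u]> :&: <[v]>.
    rewrite inE mem_cycle /=.
    have -> : u ^+ r = (v ^+ 2)^-1 by apply/eqP; rewrite eq_mulgV1 invgK -/w w1.
    by rewrite groupV mem_cycle.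
  rewrite tiUV inE -order_dvdn ou => /dvdn_leq => /(_ r_gt0).
  by rewrite leqNgt r_ltn.
have ow : #[w] = 2%N.
  apply: (prime_nt_dvdP (isT : prime 2)); first by rewrite order_eq1.
  by rewrite order_dvdn w2.
have sWB : <[w]> \subset B by apply: subsetT.
exists (coset_of <[w]>), (B / <[w]>)%G.
split.
  rewrite card_quotient // -divgS // -orderE ow oB.
  by rewrite mulnC -[4%N]/(2 * 2)%N -mulnA mulKn.
have nKB : 'N(<[w]>) = B by apply/eqP; rewrite eqEsubset subsetT nwB.
apply: intro_isoGrp => [|rT H].
  apply/existsP; exists (coset _ u, coset _ v); rewrite /= !xpair_eqE.
  rewrite -!morphX -?morphJ -?morphV /= ?nKB ?in_setT // uq uv morph1 !eqxx.
  rewrite -/B -defB -norm_joinEr // quotientY ?nKB ?subsetT //= andbT.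
  rewrite !quotient_cycle /= ?nKB ?in_setT ?eqxx //=.
  by rewrite -(coset_kerl _ (cycle_id w)) -mulgA -expgD v4 mulg1.
case/existsP=> -[x y] /= /eqP[defH xq y2 xy].
have ox: (#[x] %| #[u])%N by rewrite ou order_dvdn xq.
have oy: (#[y] %| #[v])%N.
  by rewrite ov order_dvdn (expgM y 2 2) y2 -expgM mulnC def2r xq.
have actB: {in <[u]> & <[v]>, morph_act 'J 'J (eltm ox) (eltm oy)}.
  move=> _ _ /cycleP[i ->] /cycleP[j ->] /=.
  rewrite conjXg uvj fun_if if_arg fun_if expgVn morphV ?mem_cycle //= !eltmE.
  rewrite -expgVn -if_arg -fun_if conjXg; congr (_ ^+ i).
  rewrite -{2}[j]odd_double_half addnC expgD -mul2n expgM y2.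
  rewrite -expgM conjgM (conjgE x) commuteX // mulKg.
  by case: (odd j); rewrite ?conjg1.
pose f := sdprodm sdB actB.
have Kf: 'ker (coset <[w]>) \subset 'ker f.
  rewrite ker_coset cycle_subG /= ker_sdprodm.
  apply/imset2P; exists (u ^+ r) (v ^+ 2); first exact: mem_cycle.
    by rewrite inE mem_cycle /= !eltmE y2.
  by apply: canRL (mulgK _) _; rewrite -mulgA -expgD v4 mulg1.
have Df: 'dom f \subset 'dom (coset <[w]>) by rewrite /dom nKB subsetT.
apply/homgP; exists (factm_morphism Kf Df); rewrite morphim_factm /= -/B.
rewrite -{2}defB morphim_sdprodm // !morphim_cycle ?cycle_id //= !eltm_id.
by rewrite -norm_joinEr // norms_cycle xy groupV cycle_id.
Qed.

End DicSec.

Lemma arith1 m : (1 < 2 * m + 1)%N -> (0 < m)%N. Proof. lia. Qed.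
Lemma arith2 m : (0 < m)%N -> (0 < ((2 * m + 1) * (2 * m + 1)).-1)%N. Proof. nia. Qed.
Lemma arith3 m : (0 < m)%N -> (((2 * m + 1) * (2 * m + 1)).-1 <= (2 * m + 1).-1)%N -> False.
Proof. nia. Qed.

Lemma field_facts (K : finFieldType) (sigma : {rmorphism K -> K})
  (sigma_inv : forall x, sigma (sigma x) = x)
  (char_not2 : (2%:R : K) != 0)
  (d : K) (d_notF : sigma d != d) (d2_F : sigma (d ^+ 2) = d ^+ 2) :
  exists m : nat, exists c : K,
   [/\ #|fixF sigma| = (2 * m + 1)%N, (0 < m)%N,
       primitive_root_of_unity ((2 * m + 1) * (2 * m + 1)).-1 c
     & forall x, sigma x = x ^+ #|fixF sigma| ].
Proof.
set F := fixF sigma; set q := #|F|.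
have inF x : (x \in F) = (sigma x == x) by rewrite inE.
have sd : sigma d = - d.
  have : (sigma d - d) * (sigma d + d) == 0.
    by rewrite mulrDr !mulrBl [d * sigma d]mulrC addrA subrK -!expr2 -rmorphXn d2_F subrr.
  by rewrite mulf_eq0 subr_eq0 (negPf d_notF) /= addr_eq0 => /eqP.
have d0 : d != 0 by apply: contraNneq d_notF => ->; rewrite rmorph0.
pose u x := (x + sigma x) / 2%:R.
pose v x := (x - sigma x) / (2%:R * d).
have s2 : sigma 2%:R = 2%:R :> K by rewrite rmorph_nat.
have uF x : u x \in F.
  by rewrite inF /u fmorph_div s2 rmorphD sigma_inv addrC.
have vF x : v x \in F.
  rewrite inF /v fmorph_div rmorphM s2 rmorphB sigma_inv sd; apply/eqP.
  by rewrite mulrN invrN mulrN -mulNr opprB.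
have uvE x : x = u x + v x * d.
  by rewrite /u /v; field; rewrite ?d0 ?char_not2.
have uvab a b : a \in F -> b \in F -> u (a + b * d) = a /\ v (a + b * d) = b.
  rewrite !inF => /eqP sa /eqP sb.
  rewrite /u /v rmorphD rmorphM sa sb sd; split.
    by field; rewrite ?d0 ?char_not2.
  by field; rewrite ?d0 ?char_not2.
have cardK : #|K| = (q * q)%N.
  pose phi x := (u x, v x).
  have phi_inj : injective phi.
    by move=> x y [ex ey]; rewrite (uvE x) (uvE y) ex ey.
  rewrite -cardsT -(card_imset _ phi_inj) -cardsX; apply: eq_card => -[a b].
  apply/imsetP/idP => [[x _ [-> ->]] | ]; first by rewrite in_setX uF vF.
  rewrite inE /= => /andP[aF bF]; exists (a + b * d); rewrite ?inE //.
  by rewrite /phi; have [-> ->] := uvab a b aF bF.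
have [p p_pr pab] := is_abelemP (finField_is_abelem K).
have pnK : p.-nat #|K| by rewrite -cardsT; exact: (abelem_pgroup pab).
have pnq : p.-nat q by move: pnK; rewrite cardK pnatM => /andP[].
have [k Kk] := p_natP pnK.
have pch : p \in [pchar K] := card_finPcharP Kk p_pr.
have oddq : odd q.
  have [j ->] := p_natP pnq; rewrite oddX.
  case: (even_prime p_pr) => [p2|->]; last by rewrite orbT.
  by move: char_not2; rewrite -p2 pcharf0 ?eqxx.
have pcq : ([pchar K]).-nat q by rewrite (eq_pnat _ (pcharf_eq pch)).
have frobD x y : (x + y) ^+ q = x ^+ q + y ^+ q := exprDn_pchar x y pcq.
have q_gt1 : (1 < q)%N.
  have := finNzRing_gt1 K; rewrite cardK.
  by case: (q) => [|[|n]].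
pose UF := [set w : {unit K} | sigma (val w) == val w].
have gUF : group_set UF.
  apply/group_setP; split; first by rewrite inE val_unit1 rmorph1.
  by move=> w1 w2; rewrite !inE val_unitM rmorphM => /eqP-> /eqP->.
have cardUF : #|UF| = q.-1.
  rewrite -(card_imset _ val_inj).
  have -> : [set val w | w in UF] = F :\ 0.
    apply/setP => x; rewrite !inE; apply/imsetP/andP => [[w]|[nz sx]].
      by rewrite inE => /eqP sw ->; rewrite -unitfE (valP w) sw eqxx.
    by exists (finField_unit nz) => //; rewrite inE.
  by rewrite /q (cardsD1 0 F) inF rmorph0 eqxx.
have Fpow x : x \in F -> x ^+ q = x.
  have [->|nz] := eqVneq x 0; first by rewrite expr0n; case: (q) q_gt1.
  move=> xF.
  have : finField_unit nz \in Group gUF by rewrite inE /=; rewrite inF in xF.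
  move/expg_cardG => /(congr1 val); rewrite val_unitX val_unit1 /= cardUF => e.
  by rewrite -(prednK (ltnW q_gt1)) exprS e mulr1.
have [m qm] : exists m, q = (2 * m + 1)%N.
  exists (q./2). rewrite -[in LHS](odd_double_half q) oddq addnC mul2n. by [].
have m_gt0 : (0 < m)%N by apply: arith1; rewrite -qm.
have /hasP[c _ prim_c] : has (#|K|.-1).-primitive_root (enum (predC1 (0 : K))).
  apply: has_prim_root; last by rewrite -cardE cardC1.
  - by rewrite cardK qm; apply: arith2.
  - apply/allP => x; rewrite mem_enum /= => nz; rewrite unity_rootE.
    have := expf_card x; rewrite -(prednK (ltnW (finNzRing_gt1 K))) exprS.
    by move=> H; apply/eqP; apply: (mulfI nz); rewrite mulr1.
  - exact: enum_uniq.
have c0 : c != 0.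
  apply: contra_eqN (prim_expr_order prim_c) => /eqP->; rewrite expr0n.
  have -> : (#|K|.-1 == 0)%N = false by rewrite cardK qm; apply/negbTE; rewrite -lt0n arith2.
  by rewrite eq_sym oner_eq0.
have dec x : exists a b, [/\ a \in F, b \in F & x = a + b * d].
  by exists (u x), (v x); split.
have Fd2 : d ^+ 2 \in F by rewrite inF d2_F.
have dq : d ^+ q = - d.
  have : (d ^+ q - d) * (d ^+ q + d) == 0.
    rewrite mulrDr !mulrBl [d * d ^+ q]mulrC addrA subrK -!expr2 -exprM mulnC exprM.
    by rewrite Fpow // subrr.
  rewrite mulf_eq0 subr_eq0 addr_eq0 => /orP[/eqP dqd|/eqP //].
  have allq (x : K) : x ^+ q = x.
    by have [a [b [aF bF ->]]] := dec x; rewrite frobD exprMn dqd !Fpow.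
  have : c ^+ q.-1 == 1.
    by rewrite -(inj_eq (mulfI c0)) -exprS (prednK (ltnW q_gt1)) allq mulr1.
  rewrite -(prim_order_dvd prim_c) cardK qm => /dvdn_leq H.
  by exfalso; apply: (arith3 m_gt0); apply: H; rewrite addn1 /= muln_gt0 m_gt0.
exists m, c; split => //; first by rewrite -qm -cardK.
move=> x; have [a [b [aF bF ->]]] := dec x.
rewrite rmorphD rmorphM frobD exprMn dq !Fpow // sd mulrN.
by move: aF bF; rewrite !inF mulrN => /eqP-> /eqP->.
Qed.

Definition Hf (K : fieldType) (k : K) (x : K * K) : K * K := (x.1, x.2 * k).
Definition Jf (K : fieldType) (s : K -> K) (k : K) (x : K * K) : K * K :=
  (s x.1, s x.2 * k).

Lemma Hf_inj (K : fieldType) (k : K) : k != 0 -> injective (Hf k).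
Proof. by move=> nz [x1 x2] [y1 y2] [-> /(mulIf nz) ->]. Qed.

Lemma Jf_inj (K : fieldType) (s : K -> K) (k : K) :
  injective s -> k != 0 -> injective (Jf s k).
Proof.
by move=> si nz [x1 x2] [y1 y2] [/si -> /(mulIf nz) /si ->].
Qed.

Definition goodf (K : fieldType) (s : K -> K) (a : K) (g : K * K -> K * K) : Prop :=
  [/\ forall x y, g (sf_add x y) = sf_add (g x) (g y),
      forall c x, s c = c -> g (sf_scale c x) = sf_scale c (g x)
    & forall x y, g (sf_mul s a x y) = sf_mul s a (g x) (g y)].

Lemma goodf_comp (K : fieldType) (s : K -> K) (a : K) g1 g2 :
  goodf s a g1 -> goodf s a g2 -> goodf s a (fun x => g2 (g1 x)).
Proof.
case=> A1 S1 M1 [A2 S2 M2]; split=> [x y|c x sc|x y].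
- by rewrite A1 A2.
- by rewrite S1 // S2.
- by rewrite M1 M2.
Qed.

Lemma goodf_ext (K : fieldType) (s : K -> K) (a : K) g1 g2 :
  g1 =1 g2 -> goodf s a g1 -> goodf s a g2.
Proof.
move=> e [A S M]; split=> [x y|c x sc|x y]; rewrite -!e.
- exact: A. - exact: S. - exact: M.
Qed.

Lemma goodp_mul (K : finFieldType) (s : K -> K) (a : K) (g1 g2 : {perm (K * K)}) :
  goodf s a g1 -> goodf s a g2 -> goodf s a (g1 * g2)%g.
Proof.
move=> G1 G2; apply: goodf_ext (goodf_comp G1 G2) => x; by rewrite permM.
Qed.

Lemma goodp_1 (K : finFieldType) (s : K -> K) (a : K) :
  goodf s a (1 : {perm (K * K)})%g.
Proof. by split=> *; rewrite !perm1. Qed.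

Lemma goodp_exp (K : finFieldType) (s : K -> K) (a : K) (g : {perm (K * K)}) n :
  goodf s a g -> goodf s a (g ^+ n)%g.
Proof.
move=> Gg; elim: n => [|n IH]; first exact: goodp_1.
by rewrite expgS; apply: goodp_mul.
Qed.

Lemma good_Hf (K : fieldType) (s : {rmorphism K -> K}) (a k : K) :
  k * s k = 1 -> goodf s a (Hf k).
Proof.
move=> nk; split=> [[x1 x2] [y1 y2]|c [x1 x2] sc|[x1 x2] [y1 y2]];
  rewrite /Hf /sf_add /sf_scale /sf_mul /=; congr (_, _); rewrite ?rmorphM; try ring.
by ring: nk.
Qed.

Lemma good_Jf (K : fieldType) (s : {rmorphism K -> K}) (a k : K) :
  (forall x, s (s x) = x) -> k * s k = -1 -> s a = - a -> goodf s a (Jf s k).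
Proof.
move=> si nk sa; split=> [[x1 x2] [y1 y2]|c [x1 x2] sc|[x1 x2] [y1 y2]];
  rewrite /Jf /sf_add /sf_scale /sf_mul /=; congr (_, _);
  rewrite ?rmorphD ?rmorphM ?si ?sc ?sa; try ring.
by ring: nk.
Qed.

Lemma good_loop (K : finFieldType) (s : {rmorphism K -> K}) (a : K) (g : {perm (K * K)}) :
  goodf s a g -> g \in AutLf s a.
Proof.
case=> A S M; rewrite inE; apply/andP; split.
  have := A sf_zero sf_zero; rewrite /sf_add /= addr0.
  case: (g (0, 0)) => g1 g2 [e1 e2]; apply/eqP; congr (_, _).
    by apply: (addrI g1); rewrite addr0.
  by apply: (addrI g2); rewrite addr0.
by apply/forallP => x; apply/forallP => y; rewrite M.
Qed.

Lemma good_ext (K : finFieldType) (s : {rmorphism K -> K}) (a : K) (g : {perm (K * K)}) :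
  goodf s a g -> extends_to_aut s a g.
Proof.
case=> A S M; exists g; split => //; split => //.
by exists (fun x => (g^-1)%g x) => x; rewrite ?permK ?permKV.
Qed.


Lemma arN m : (((2 * m + 1) * (2 * m + 1)).-1 = 2 * m * (2 * m + 2))%N.
Proof. nia. Qed.
Lemma arM m : (m * (2 * m + 2) * 2 = 2 * m * (2 * m + 2))%N.
Proof. nia. Qed.
Lemma arM2 m : (0 < m)%N -> (2 * m * (2 * m + 2) <= m * (2 * m + 2))%N -> False.
Proof. nia. Qed.
Lemma arM3 m : (2 * m * (m + 1) = m * (2 * m + 2))%N.
Proof. nia. Qed.
Lemma arK m : (m + m + 2 * m * m = m * (2 * m + 2))%N.
Proof. nia. Qed.
Lemma arH m : ((2 * m + 1).+1)./2 = (m + 1)%N.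
Proof.
have -> : ((2 * m + 1).+1 = (m + 1).*2)%N by rewrite -mul2n; lia.
by rewrite doubleK.
Qed.

Lemma sd_lemma (K : fieldType) (sigma : {rmorphism K -> K}) (d : K) :
  sigma d != d -> sigma (d ^+ 2) = d ^+ 2 -> sigma d = - d.
Proof.
move=> d_notF d2_F.
have : (sigma d - d) * (sigma d + d) == 0.
  by rewrite mulrDr !mulrBl [d * sigma d]mulrC addrA subrK -!expr2 -rmorphXn d2_F subrr.
by rewrite mulf_eq0 subr_eq0 (negPf d_notF) /= addr_eq0 => /eqP.
Qed.

Unset Implicit Arguments.

Theorem mainTheorem6 (K : finFieldType) (sigma : {rmorphism K -> K})
  (sigma_inv : forall x, sigma (sigma x) = x)
  (sigma_nontriv : exists x, sigma x != x)
  (char_not2 : (2%:R : K) != 0)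
  (d : K) (d_notF : sigma d != d) (d2_F : sigma (d ^+ 2) = d ^+ 2)
  (a : K) (a_notF : sigma a != a) :
  let q := #|fixF sigma| in
  ((forall lam : K, sigma lam = lam -> lam != 0 -> a != lam * d) ->
     exists G : {group {perm (K * K)}},
       [/\ G \subset AutLf sigma a, (G \isog Zp q.+1)%g &
           forall phi, phi \in G -> inner_aut sigma a phi /\ extends_to_aut sigma a phi])
  /\
  ((exists lam : K, [/\ sigma lam = lam, lam != 0 & a = lam * d]) ->
     exists G : {group {perm (K * K)}},
       [/\ G \subset AutLf sigma a,
           (G \isog Grp (x : y : (x ^+ q.+1, y ^+ 2 = x ^+ (q.+1)./2, x ^ y = x ^-1)))%g &
           forall phi, phi \in G -> extends_to_aut sigma a phi]).
Proof.
move=> q.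
have [m [c [qm m_gt0 prim_c frob]]] := field_facts sigma_inv char_not2 d_notF d2_F.
have qm' : q = (2 * m + 1)%N := qm.
set N := ((2 * m + 1) * (2 * m + 1)).-1 in prim_c.
have cN j : (c ^+ j == 1) = (N %| j)%N by rewrite (prim_order_dvd prim_c).
have c0 : c != 0.
  apply: contra_eqN (prim_expr_order prim_c) => /eqP->; rewrite expr0n.
  have -> : (N == 0)%N = false by rewrite /N arN; apply/negbTE; rewrite -lt0n !muln_gt0 m_gt0 addn2.
  by rewrite eq_sym oner_eq0.
have sc x : sigma x = x ^+ (2 * m + 1) by rewrite frob qm.
pose w := c ^+ (2 * m).
have w0 : w != 0 by rewrite expf_neq0.
have scw : sigma c = c * w by rewrite sc addn1 exprS.
have scn n : sigma (c ^+ n) = c ^+ n * w ^+ n by rewrite rmorphXn scw exprMn.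
have wX n : (w ^+ n == 1) = (2 * m + 2 %| n)%N.
  by rewrite -exprM cN /N arN dvdn_pmul2l // muln_gt0 m_gt0.
have nw : w * sigma w = 1.
  by apply/eqP; rewrite sc -exprS -addn1 -addnA wX.
pose h := perm (Hf_inj w0).
have hX n x : (h ^+ n)%g x = Hf (w ^+ n) x.
  elim: n x => [|n IH] x; first by rewrite expg0 perm1 /Hf expr0 mulr1; case: x.
  by rewrite expgSr permM IH permE /Hf /= exprSr mulrA.
have hX1 n : ((h ^+ n)%g == 1%g) = (w ^+ n == 1).
  apply/eqP/eqP => [e | e].
    have := congr1 (fun g : {perm (K * K)} => g (0, 1)) e.
    by rewrite /= hX perm1 /Hf /= mul1r => -[].
  by apply/permP => x; rewrite hX perm1 /Hf e mulr1; case: x.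
have oh : #[h]%g = (2 * m + 2)%N.
  apply/eqP; rewrite eqn_dvd order_dvdn hX1 wX dvdnn /=.
  by rewrite -wX -hX1 expg_order.
have good_h n : goodf sigma a (h ^+ n)%g.
  apply: goodp_exp; apply: (goodf_ext (g1 := Hf w)); last exact: good_Hf.
  by move=> x; rewrite permE.
split.
  move=> _; exists <[h]>%G; split.
  - by apply/subsetP => g /cycleP[n ->]; apply: good_loop.
  - rewrite isog_sym (_ : q.+1 = #[h]%g) ?Zp_isog //.
    by rewrite oh qm' addn1 addn2.
  move=> phi /cycleP[n ->]; split; last exact: good_ext.
  have cn0 : c ^+ n != 0 by rewrite expf_neq0.
  exists (c ^+ n, 0), ((c ^+ n)^-1, 0); split.
  - by apply/eqP => -[]; apply/eqP.
  - rewrite /sf_mul /sf_one /= rmorph0 mulVf //; congr (_, _); ring.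
  move=> [x1 x2] _; rewrite hX /Hf /sf_mul /= rmorph0 scn.
  congr (_, _); field; exact: cn0.
case=> lam [slam lam0 ad].
have sd := sd_lemma d_notF d2_F.
have sa : sigma a = - a by rewrite ad rmorphM slam sd mulrN.
have cmm : c ^+ (m * (2 * m + 2)) = -1.
  have : (c ^+ (m * (2 * m + 2))) ^+ 2 == 1 by rewrite -exprM arM cN /N arN.
  rewrite sqrf_eq1 => /orP[|/eqP //].
  rewrite cN /N arN => /dvdn_leq H; exfalso; apply: (arM2 m_gt0); apply: H.
  by rewrite !muln_gt0 m_gt0 addn2.
pose k := c ^+ m.
have k0 : k != 0 by rewrite expf_neq0.
have nk : k * sigma k = -1.
  by rewrite /k scn /w -exprM mulrA -!exprD arK cmm.
have wm1 : w ^+ (m + 1) = -1 by rewrite -exprM arM3.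
pose y := perm (Jf_inj (can_inj sigma_inv) k0).
have good_y : goodf sigma a y.
  apply: (goodf_ext (g1 := Jf sigma k)); last exact: good_Jf.
  by move=> x; rewrite permE.
have hq : (h ^+ q.+1)%g = 1%g by apply/eqP; rewrite hX1 wX qm' addn1 addn2 dvdnn.
have half : uphalf q = (m + 1)%N by rewrite qm'; exact: arH.
have y2 : (y ^+ 2)%g = (h ^+ (m + 1))%g.
  apply/permP => -[x1 x2]; rewrite expgS expg1 permM hX !permE /Jf /Hf /=.
  by rewrite rmorphM !sigma_inv wm1; congr (_, _); ring: nk.
have hyh : (h * y * h)%g = y.
  apply/permP => -[x1 x2]; rewrite !permM !permE /Jf /Hf /= rmorphM.
  by congr (_, _); ring: nw.
have hy : (h * y = y * h^-1)%g by rewrite -{2}hyh mulgK.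
have hconj : (h ^ y)%g = (h^-1)%g by rewrite conjgE hy mulKg.
pose G := (<[h]> <*> <[y]>)%G.
have nyh : <[y]>%g \subset 'N(<[h]>)%g by rewrite norms_cycle hconj groupV cycle_id.
have Gmem g : g \in G -> goodf sigma a g.
  rewrite /= norm_joinEr // => /mulsgP[g1 g2 /cycleP[i ->] /cycleP[j ->] ->].
  by apply: goodp_mul; [apply: good_h | apply: goodp_exp].
exists G; split.
- by apply/subsetP => g /Gmem; apply: good_loop.
- have n_gt1 : (1 < q.+1)%N by rewrite qm' addn1.
  have n_ev : ~~ odd q.+1 by rewrite qm' addn1 /= negbK oddM.
  have [gT [Q [cQ isoQ]]] := dicyclic_exists n_gt1 n_ev.
  apply: (isoGrp_trans _ isoQ).
  have homG : (G \homg Grp (x : y : (x ^+ q.+1, y ^+ 2 = x ^+ (q.+1)./2, x ^ y = x ^-1)))%g.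
    by apply/existsP; exists (h, y); rewrite /= !xpair_eqE hq half y2 hconj !eqxx.
  apply/(isoGrpP _ isoQ); split => //.
  have GQ : (G \homg Q)%g by rewrite isoQ.
  have dv1 := card_homg GQ; rewrite cQ in dv1.
  have ch : #|<[h]>%g| = q.+1 by rewrite -orderE oh qm' addn1 addn2.
  have dv2 : (q.+1 %| #|G|)%N by rewrite -ch cardSg // joing_subl.
  have yG : y \in G by rewrite (subsetP (joing_subr _ _)) ?cycle_id.
  have yh : y \notin <[h]>%g.
    apply/negP => /cycleP[i e].
    have := congr1 (fun g : {perm (K * K)} => g (d, 0)) e.
    rewrite /= hX permE /Jf /Hf /= => -[e1 _].
    by rewrite e1 eqxx in d_notF.
  case/dvdnP: dv2 => j cG; rewrite cQ cG.
  move: dv1; rewrite cG dvdn_pmul2r //.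
  case: j cG => [|[|[|j]]] cG //.
  + have : <[h]>%g == G by rewrite eqEcard joing_subl ch cG mul1n leqnn.
    by move/eqP => eG; move: yh; rewrite eG yG.
- by move=> phi /Gmem; apply: good_ext.
Qed.
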